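(* The morphism of algebraic patterns $\Xi^{\mathrm{op}}\colon\Theta^{\mathrm{op}}\to\Theta^{\mathrm{op}}$ is a strong Segal morphism: for every $T\in\Theta$ the induced functor $\Theta^{\mathrm{el}}_{/T}\to\Theta^{\mathrm{el}}_{/\Xi T}$ is final.
   Context: $\Theta$ is Joyal's cell category (strict $\omega$-categories free on globular sums); inert morphisms are those free on morphisms of $\omega$-graphs between globular sums, elementary objects are the globes $\mathbf D_n$, and $\Theta^{\mathrm{el}}_{/T}$ denotes the category of inert morphisms $E\to T$ in $\Theta$ with $E$ elementary. $\Xi$ is the suspension, with $\Xi\mathbf D_n=\mathbf D_{n+1}$. Every $T\in\Theta$ has a unique globular presentation $T\simeq\mathbf D_{n_1}\amalg_{\mathbf D_{m_1}}\cdots\amalg_{\mathbf D_{m_{p-1}}}\mathbf D_{n_p}$ with $m_i<n_i,n_{i+1}$, and the corresponding zigzag diagram is final in $\Theta^{\mathrm{el}}_{/T}$. *)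

(* Defs.v *)
From Stdlib Require Import ProofIrrelevance.
From mathcomp Require Import all_boot.

Set Implicit Arguments.
Unset Strict Implicit.
Unset Printing Implicit Defensive.

Lemma sig_eq (A : Type) (P : A -> Prop) (x y : sig P) :
  proj1_sig x = proj1_sig y -> x = y.
Proof.
case: x => a pa; case: y => b pb /= eab; subst b.
by rewrite (proof_irrelevance _ pa pb).
Qed.

Definition monob m n (f : {ffun 'I_m.+1 -> 'I_n.+1}) : bool :=
  [forall i : 'I_m.+1, forall j : 'I_m.+1, (i <= j) ==> (f i <= f j)].

Definition dmap m n := {f : {ffun 'I_m.+1 -> 'I_n.+1} | monob f}.

Lemma monobP m n (f : {ffun 'I_m.+1 -> 'I_n.+1}) :
  reflect (forall i j : 'I_m.+1, i <= j -> f i <= f j) (monob f).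
Proof.
apply: (iffP forallP) => [H i j lij | H i].
  by move/forallP: (H i) => /(_ j) /implyP; apply.
by apply/forallP => j; apply/implyP; exact: H.
Qed.

Lemma dmap_mono m n (f : dmap m n) (i j : 'I_m.+1) :
  i <= j -> proj1_sig f i <= proj1_sig f j.
Proof. by case: f => f /= /monobP; apply. Qed.
Arguments dmap_mono {m n} f {i j}.

Definition dcomp l m n (g : dmap m n) (f : dmap l m) : dmap l n.
Proof.
refine (exist _ [ffun i => proj1_sig g (proj1_sig f i)] _).
apply/monobP => i j lij; rewrite !ffunE.
have := dmap_mono f lij; exact: dmap_mono.
Defined.

Definition did n : dmap n n.
Proof. by refine (exist _ [ffun i => i] _); apply/monobP => i j; rewrite !ffunE. Defined.

Definition dconst n m (v : 'I_m.+1) : dmap n m.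
Proof. by refine (exist _ [ffun _ => v] _); apply/monobP => i j; rewrite !ffunE. Defined.

(* A simplicial set: a functor Delta^op -> Type (the laws are a separate
   predicate, imposed where needed). *)
Record sSet := SSet {
  sx : nat -> Type;
  sact : forall m n, dmap m n -> sx n -> sx m }.
Arguments sact _ {m n}.

Definition sSet_laws (X : sSet) : Prop :=
  (forall n (x : sx X n), sact X (did n) x = x) /\
  (forall l m n (g : dmap m n) (f : dmap l m) (x : sx X n),
      sact X (dcomp g f) x = sact X f (sact X g x)).

Definition smap (X Y : sSet) :=
  {phi : forall n, sx X n -> sx Y n |
     forall m n (f : dmap m n) (x : sx X n), phi m (sact X f x) = sact Y f (phi n x)}.

(* f : [m] -> [n] is a simplex of the horn Lambda^n_k *)
Definition in_horn n (k : 'I_n.+1) m (f : dmap m n) : bool :=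
  [exists j : 'I_n.+1, (j != k) && [forall i, proj1_sig f i != j]].

Definition kan (K : sSet) : Prop :=
  sSet_laws K /\
  forall n (k : 'I_n.+1), 0 < n ->
  forall h : (forall m (f : dmap m n), in_horn k f -> sx K m),
    (forall l m (g : dmap l m) (f : dmap m n) (p : in_horn k f)
            (p' : in_horn k (dcomp f g)),
        h l (dcomp f g) p' = sact K g (h m f p)) ->
    exists x : sx K n, forall m (f : dmap m n) (p : in_horn k f),
        h m f p = sact K f x.

(* simplicial homotopy X x Delta^1 -> K between two families of maps *)
Definition shtpy (X K : sSet) (phi psi : forall n, sx X n -> sx K n) : Prop :=
  exists H : (forall n, sx X n -> dmap n 1 -> sx K n),
    (forall m n (a : dmap m n) (x : sx X n) (u : dmap n 1),
        H m (sact X a x) (dcomp u a) = sact K a (H n x u)) /\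
    (forall n x, H n x (dconst n (ord0 : 'I_2)) = phi n x) /\
    (forall n x, H n x (dconst n (ord_max : 'I_2)) = psi n x).

(* X is weakly contractible (X -> * is a weak homotopy equivalence):
   X is nonempty and every map from X to a Kan complex K is homotopic to a
   constant map, i.e. [*, K] -> [X, K] is bijective for all Kan K. *)
Definition wcontr (X : sSet) : Prop :=
  inhabited (sx X 0) /\
  forall K : sSet, kan K -> forall phi : smap X K,
    exists v : sx K 0,
      shtpy (proj1_sig phi) (fun n _ => sact K (dconst n (ord0 : 'I_1)) v).

Record cat := Cat {
  ob : Type;
  hom : ob -> ob -> Type;
  idm : forall a, hom a a;
  cmp : forall a b c, hom b c -> hom a b -> hom a c;
  cmp1l : forall a b (f : hom a b), cmp (idm b) f = f;
  cmp1r : forall a b (f : hom a b), cmp f (idm a) = f;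
  cmpA : forall a b c d (h : hom c d) (g : hom b c) (f : hom a b),
      cmp h (cmp g f) = cmp (cmp h g) f }.
Arguments idm : clear implicits.
Arguments hom : clear implicits.
Arguments cmp c {a b c0} : rename.

Record functor (C D : cat) := Functor {
  fo : ob C -> ob D;
  fm : forall a b, hom C a b -> hom D (fo a) (fo b);
  fm1 : forall a, fm (idm C a) = idm D (fo a);
  fmM : forall a b c (g : hom C b c) (f : hom C a b),
      fm (cmp C g f) = cmp D (fm g) (fm f) }.
Arguments fo {C D} _ a.
Arguments fm {C D} _ {a b}.

Record nsimp (C : cat) (n : nat) := NSimp {
  nob : 'I_n.+1 -> ob C;
  nmor : forall i j : 'I_n.+1, i <= j -> hom C (nob i) (nob j);
  nmor1 : forall (i : 'I_n.+1) (h : i <= i), nmor h = idm C (nob i);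
  nmorM : forall i j k : 'I_n.+1, forall (hij : i <= j) (hjk : j <= k) (hik : i <= k),
      nmor hik = cmp C (nmor hjk) (nmor hij) }.

Definition nact (C : cat) m n (f : dmap m n) (x : nsimp C n) : nsimp C m :=
  @NSimp C m (fun i => nob x (proj1_sig f i))
    (fun i j h => nmor x (dmap_mono f h))
    (fun i h => nmor1 x (dmap_mono f h))
    (fun i j k hij hjk hik => nmorM x (dmap_mono f hij) (dmap_mono f hjk) (dmap_mono f hik)).

Definition nerve (C : cat) : sSet := @SSet (nsimp C) (@nact C).

(* the comma category d / F  (= C_{d/} := C x_D D_{d/}) *)
Section Comma.
Variables (C D : cat) (F : functor C D) (d : ob D).

Definition comma_ob := {c : ob C & hom D d (fo F c)}.
Definition comma_hom (x y : comma_ob) :=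
  {g : hom C (projT1 x) (projT1 y) | cmp D (fm F g) (projT2 x) = projT2 y}.

Definition comma_idm (x : comma_ob) : comma_hom x x.
Proof. by exists (idm C _); rewrite fm1 cmp1l. Defined.

Definition comma_cmp (x y z : comma_ob) (g : comma_hom y z) (f : comma_hom x y) :
  comma_hom x z.
Proof.
exists (cmp C (proj1_sig g) (proj1_sig f)).
by rewrite fmM -cmpA (proj2_sig f) (proj2_sig g).
Defined.

Lemma comma_cmp1l x y (f : comma_hom x y) : comma_cmp (comma_idm y) f = f.
Proof. by apply: sig_eq; rewrite /= cmp1l. Qed.
Lemma comma_cmp1r x y (f : comma_hom x y) : comma_cmp f (comma_idm x) = f.
Proof. by apply: sig_eq; rewrite /= cmp1r. Qed.
Lemma comma_cmpA x y z w (h : comma_hom z w) (g : comma_hom y z) (f : comma_hom x y) :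
  comma_cmp h (comma_cmp g f) = comma_cmp (comma_cmp h g) f.
Proof. by apply: sig_eq; rewrite /= cmpA. Qed.

Definition comma : cat :=
  @Cat comma_ob comma_hom comma_idm comma_cmp comma_cmp1l comma_cmp1r comma_cmpA.
End Comma.

(* (infinity-categorical) finality of a functor between 1-categories:
   all comma categories d / F are weakly contractible (Quillen's Theorem A
   criterion, Lurie HTT 4.1.3.1). *)
Definition final (C D : cat) (F : functor C D) : Prop :=
  forall d : ob D, wcontr (nerve (comma F d)).

(* A tree Node [:: t_1; ...; t_r] encodes the globular sum obtained by
   gluing the suspensions Xi t_1, ..., Xi t_r end to end along 0-cells. *)
Inductive tree := Node of seq tree.

Definition children (t : tree) : seq tree := let: Node ts := t in ts.

(* Cells of (the omega-graph underlying) a globular sum: a k-cell is a list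
   [:: i_1; ...; i_k; j] (i_1 selects a child of the root, i_2 a child of
   that child, ...; j selects a 0-cell, i.e. a vertex, of the last tree). *)
Fixpoint is_cell (c : seq nat) (t : tree) : bool :=
  match c with
  | [::] => false
  | [:: j] => j <= size (children t)
  | i :: c' => (i < size (children t)) && is_cell c' (nth (Node [::]) (children t) i)
  end.

(* the m-dimensional source (b = false) / target (b = true) of a cell d *)
Definition bnd (b : bool) (m : nat) (d : seq nat) : seq nat :=
  rcons (take m d) (nth 0 d m + b).

(* morphisms of globes D_m -> D_n in the inert part of Theta:
   identity, or (for m < n) the inclusion of the m-source / m-target *)
Inductive glab := GId | GSrc | GTgt.

Definition valid (g : glab) (c d : seq nat) : bool :=
  match g with
  | GId => c == d
  | GSrc => (size c < size d) && (c == bnd false (size c).-1 d)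
  | GTgt => (size c < size d) && (c == bnd true (size c).-1 d)
  end.

Definition glab_cmp (g f : glab) : glab :=
  match f with GId => g | _ => f end.

Lemma bnd_bnd b b' m n d : m < n -> n < size d ->
  bnd b' m (bnd b n d) = bnd b' m d.
Proof.
move=> mn nd; rewrite /bnd; congr rcons.
  rewrite -cats1 takel_cat; last by rewrite size_take nd ltnW.
  by rewrite take_takel // ltnW.
by rewrite nth_rcons size_take nd mn nth_take.
Qed.

Lemma size_bnd b m d : size (bnd b m d) = (minn m (size d)).+1.
Proof. by rewrite /bnd size_rcons size_take_min. Qed.


Lemma bnd_trans b b' x y z :
  size x < size y -> x = bnd b' (size x).-1 y ->
  size y < size z -> y = bnd b (size y).-1 z ->
  x = bnd b' (size x).-1 z.
Proof.
move=> sxy ex syz ey.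
have px : 0 < size x by rewrite ex size_bnd.
have py : 0 < size y by rewrite ey size_bnd.
rewrite {1}ex {1}ey bnd_bnd //.
  by rewrite -ltnS !prednK.
by rewrite -ltnS prednK // ltnW.
Qed.

Lemma valid_cmp (g f : glab) (x y z : seq nat) :
  valid f x y -> valid g y z -> valid (glab_cmp g f) x z.
Proof.
case: f => /=; first by move/eqP->.
all: case/andP=> sxy /eqP ex; case: g => /=; first by move/eqP<-; rewrite sxy; apply/eqP.
all: case/andP=> syz /eqP ey; rewrite (ltn_trans sxy syz) /=; apply/eqP.
all: exact: bnd_trans ey.
Qed.

(* Theta^el_{/T}: objects are the inert morphisms D_n -> T, i.e. the
   n-cells of the omega-graph underlying T; morphisms (from c to d) are the
   inert morphisms of globes D_{dim c} -> D_{dim d} over T. *)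
Section ThetaEl.
Variable T : tree.

Definition el_ob := {c : seq nat | is_cell c T}.
Definition el_hom (x y : el_ob) := {g : glab | valid g (proj1_sig x) (proj1_sig y)}.

Definition el_idm (x : el_ob) : el_hom x x := exist _ GId (eqxx _).

Definition el_cmp (x y z : el_ob) (g : el_hom y z) (f : el_hom x y) : el_hom x z :=
  exist _ (glab_cmp (proj1_sig g) (proj1_sig f))
    (valid_cmp (proj2_sig f) (proj2_sig g)).

Lemma el_cmp1l x y (f : el_hom x y) : el_cmp (el_idm y) f = f.
Proof. by apply: sig_eq; case: f => -[]. Qed.
Lemma el_cmp1r x y (f : el_hom x y) : el_cmp f (el_idm x) = f.
Proof. by apply: sig_eq. Qed.
Lemma el_cmpA x y z w (h : el_hom z w) (g : el_hom y z) (f : el_hom x y) :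
  el_cmp h (el_cmp g f) = el_cmp (el_cmp h g) f.
Proof. by apply: sig_eq; case: f => -[]; case: g => -[]. Qed.

Definition theta_el : cat :=
  @Cat el_ob el_hom el_idm el_cmp el_cmp1l el_cmp1r el_cmpA.
End ThetaEl.

Definition susp (T : tree) : tree := Node [:: T].

(* Xi on cells: a cell c of T (an inert map D_n -> T) goes to the cell
   0 :: c of Xi T (the inert map Xi D_n = D_{n+1} -> Xi T). *)
Lemma is_cell_susp T c : is_cell c T -> is_cell (0 :: c) (susp T).
Proof. by case: c. Qed.

Lemma bnd_cons b k y : bnd b k.+1 (0 :: y) = 0 :: bnd b k y.
Proof. by []. Qed.

Lemma valid_susp g c d : valid g c d -> valid g (0 :: c) (0 :: d).
Proof.
case: g => /=; first by move/eqP->.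
all: case/andP=> scd /eqP ec; rewrite ltnS scd /=.
all: have pc : 0 < size c by rewrite ec size_bnd.
all: by rewrite -[size c](prednK pc) bnd_cons -(prednK pc) -ec.
Qed.

Section Xi.
Variable T : tree.

Definition xi_fo (x : ob (theta_el T)) : ob (theta_el (susp T)) :=
  exist _ (0 :: proj1_sig x) (is_cell_susp (proj2_sig x)).

Definition xi_fm (x y : ob (theta_el T)) (g : hom (theta_el T) x y) :
  hom (theta_el (susp T)) (xi_fo x) (xi_fo y) :=
  exist _ (proj1_sig g) (valid_susp (proj2_sig g)).

Lemma xi_fm1 x : xi_fm (idm (theta_el T) x) = idm (theta_el (susp T)) (xi_fo x).
Proof. by apply: sig_eq. Qed.
Lemma xi_fmM x y z (g : hom (theta_el T) y z) (f : hom (theta_el T) x y) :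
  xi_fm (cmp (theta_el T) g f) = cmp (theta_el (susp T)) (xi_fm g) (xi_fm f).
Proof. by apply: sig_eq. Qed.

Definition xi_el : functor (theta_el T) (theta_el (susp T)) :=
  @Functor _ _ xi_fo xi_fm xi_fm1 xi_fmM.
End Xi.

(* Main.v *)
Require Import Defs.
From mathcomp Require Import all_boot.
From Stdlib Require Import ProofIrrelevance FunctionalExtensionality ClassicalEpsilon.

Set Implicit Arguments.
Unset Strict Implicit.
Unset Printing Implicit Defensive.
Section Chains.
Variable B : finType.
Variable le : rel B.
Variable top : B.
Hypothesis le_refl : reflexive le.
Hypothesis le_trans : transitive le.
Hypothesis le_anti : antisymmetric le.
Hypothesis le_top : forall b, le b top.

Definition monoc n (s : {ffun 'I_n.+1 -> B}) :=
  [forall i : 'I_n.+1, forall j : 'I_n.+1, (i <= j) ==> le (s i) (s j)].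
Definition chain n := {s : {ffun 'I_n.+1 -> B} | monoc s}.

Lemma monocP n (s : {ffun 'I_n.+1 -> B}) :
  reflect (forall i j : 'I_n.+1, i <= j -> le (s i) (s j)) (monoc s).
Proof.
apply: (iffP forallP) => [H i j lij | H i].
  by move/forallP: (H i) => /(_ j) /implyP; apply.
by apply/forallP => j; apply/implyP; exact: H.
Qed.

Lemma chain_mono n (s : chain n) (i j : 'I_n.+1) :
  i <= j -> le (proj1_sig s i) (proj1_sig s j).
Proof. by case: s => s /= /monocP; apply. Qed.

Lemma chain_eq n (s s' : chain n) :
  (forall i, proj1_sig s i = proj1_sig s' i) -> s = s'.
Proof. by move=> H; apply: sig_eq; apply/ffunP. Qed.

Definition act m n (f : dmap m n) (s : chain n) : chain m.
Proof.
refine (exist _ [ffun i => proj1_sig s (proj1_sig f i)] _).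
apply/monocP => i j lij; rewrite !ffunE; apply: chain_mono; exact: dmap_mono.
Defined.

Lemma act_comp l m n (g : dmap m n) (f : dmap l m) (s : chain n) :
  act (dcomp g f) s = act f (act g s).
Proof. by apply: chain_eq => i; rewrite /= !ffunE. Qed.

Definition im n (s : chain n) : {set B} := [set proj1_sig s i | i : 'I_n.+1].

Lemma im_act m n (f : dmap m n) (s : chain n) : im (act f s) \subset im s.
Proof.
apply/subsetP => x /imsetP [i _ ->]; rewrite /= ffunE.
by apply/imsetP; exists (proj1_sig f i).
Qed.

Definition dclosed (G : pred {set B}) :=
  forall U V : {set B}, U \subset V -> G V -> G U.
Definition tot (U : {set B}) :=
  [forall a in U, forall b in U, le a b || le b a].

Lemma totP (U : {set B}) :
  reflect {in U &, total le} (tot U).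
Proof.
apply: (iffP forallP) => [H a b aU bU | H a].
  by move/implyP: (H a) => /(_ aU) /forallP /(_ b) /implyP /(_ bU).
by apply/implyP => aU; apply/forallP => b; apply/implyP => bU; apply: H.
Qed.

Variable K : sSet.
Hypothesis kanK : kan K.

Definition natural_on (G : pred {set B}) (psi : forall n, chain n -> sx K n) :=
  forall m n (f : dmap m n) (s : chain n), G (im s) ->
    psi m (act f s) = sact K f (psi n s).
Definition agree_on (G : pred {set B}) (psi psi' : forall n, chain n -> sx K n) :=
  forall n (s : chain n), G (im s) -> psi n s = psi' n s.
Definition Ext (G0 G1 : pred {set B}) :=
  forall psi, natural_on G0 psi ->
    exists psi', natural_on G1 psi' /\ agree_on G0 psi psi'.

Lemma Ext_refl (G : pred {set B}) : Ext G G.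
Proof. by move=> psi H; exists psi. Qed.

Lemma Ext_trans (G0 G1 G2 : pred {set B}) : (forall U, G0 U -> G1 U) ->
  Ext G0 G1 -> Ext G1 G2 -> Ext G0 G2.
Proof.
move=> sub E1 E2 psi N0; have [psi1 [N1 A1]] := E1 psi N0.
have [psi2 [N2 A2]] := E2 psi1 N1; exists psi2; split => // n s Gs.
by rewrite A1 // A2 // sub.
Qed.

Lemma Ext_eq (G0 G1 G1' : pred {set B}) : (forall U, G1 U = G1' U) -> Ext G0 G1 -> Ext G0 G1'.
Proof.
move=> eG E psi N0; have [psi1 [N1 A1]] := E psi N0; exists psi1; split => //.
by move=> m n f s; rewrite -eG; apply: N1.
Qed.

Section Step.
Variables (G : pred {set B}) (V : {set B}) (w : B).
Hypotheses (Gd : dclosed G) (totV : tot V) (wV : w \in V) (cardV : 1 < #|V|)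
  (faces : forall w', w' \in V -> w' != w -> G (V :\ w')) (nface : ~~ G (V :\ w)).

Let ls := sort le (enum V).
Let n := #|V|.-1.

Lemma size_ls : size ls = n.+1.
Proof. by rewrite size_sort -cardE /n prednK // ltnW. Qed.

Lemma sorted_ls : sorted le ls.
Proof.
apply: (@sort_sorted_in _ (mem V)); first exact/totP.
by apply/allP => x; rewrite mem_enum.
Qed.

Lemma uniq_ls : uniq ls.
Proof. by rewrite sort_uniq enum_uniq. Qed.

Lemma mem_ls x : (x \in ls) = (x \in V).
Proof. by rewrite mem_sort mem_enum. Qed.

Lemma nth_ls_mono a b : a <= b -> b < n.+1 -> le (nth w ls a) (nth w ls b).
Proof.
move=> ab bn.
apply: (sorted_leq_nth le_trans le_refl w sorted_ls) => //; rewrite inE size_ls //.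
exact: leq_ltn_trans bn.
Qed.

Definition tau : chain n.
Proof.
refine (exist _ [ffun i : 'I_n.+1 => nth w ls i] _).
by apply/monocP => i j lij; rewrite !ffunE; apply: nth_ls_mono.
Defined.

Lemma tau_inj (i j : 'I_n.+1) : proj1_sig tau i = proj1_sig tau j -> i = j.
Proof.
rewrite /= !ffunE => /eqP; rewrite nth_uniq ?size_ls //; last exact: uniq_ls.
by move/eqP/val_inj.
Qed.

Lemma im_tau : im tau = V.
Proof.
apply/setP => x; apply/imsetP/idP => [[i _ ->] | xV].
  by rewrite /= ffunE -mem_ls mem_nth // size_ls.
have xl : x \in ls by rewrite mem_ls.
have ix : index x ls < n.+1 by rewrite -size_ls index_mem.
by exists (Ordinal ix) => //=; rewrite ffunE /= nth_index.
Qed.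

Lemma tau_in (i : 'I_n.+1) : proj1_sig tau i \in V.
Proof. by rewrite -im_tau; apply/imsetP; exists i. Qed.

Definition kk : 'I_n.+1 := inord (index w ls).

Lemma tau_k : proj1_sig tau kk = w.
Proof.
have wl : w \in ls by rewrite mem_ls.
by rewrite /= ffunE /kk inordK ?nth_index // -size_ls index_mem.
Qed.

Definition fs_fun m (s : chain m) : {ffun 'I_m.+1 -> 'I_n.+1} :=
  [ffun i => inord (index (proj1_sig s i) ls)].

Lemma fs_val m (s : chain m) i : im s \subset V ->
  nth w ls (fs_fun s i) = proj1_sig s i.
Proof.
move=> /subsetP sV; have siV : proj1_sig s i \in V by apply: sV; apply/imsetP; exists i.
rewrite ffunE inordK ?nth_index ?mem_ls //.
by rewrite -size_ls index_mem mem_ls.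
Qed.

Lemma fs_mono m (s : chain m) : im s \subset V -> monob (fs_fun s).
Proof.
move=> sV; apply/monobP => i j lij; rewrite leqNgt; apply/negP => ltji.
have h1 : le (proj1_sig s j) (proj1_sig s i).
  rewrite -(fs_val j sV) -(fs_val i sV).
  by apply: nth_ls_mono; rewrite // ltnW.
have h2 := chain_mono s lij.
have e : proj1_sig s i = proj1_sig s j by apply: le_anti; rewrite h2 h1.
by move: ltji; rewrite !ffunE e ltnn.
Qed.

Definition fsd m (s : chain m) : dmap m n := insubd (@dconst m n ord0) (fs_fun s).

Lemma fsd_val m (s : chain m) : im s \subset V -> proj1_sig (fsd s) = fs_fun s.
Proof. by move=> sV; rewrite /fsd insubdK //; exact: fs_mono. Qed.

Lemma act_fsd m (s : chain m) : im s \subset V -> act (fsd s) tau = s.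
Proof.
move=> sV; apply: chain_eq => i; rewrite /= !ffunE fsd_val //.
by rewrite -(fs_val i sV).
Qed.

Lemma horn_G m (f : dmap m n) : in_horn kk f -> G (im (act f tau)).
Proof.
case/existsP => j /andP [jk /forallP nj].
have tj : proj1_sig tau j != w.
  by rewrite -tau_k; apply/negP => /eqP /tau_inj /eqP; rewrite (negbTE jk).
apply: (Gd _ (faces (tau_in j) tj)).
apply/subsetP => x /imsetP [i _ ->]; rewrite /= ffunE in_setD1.
rewrite (tau_in (proj1_sig f i)) andbT; apply/negP => /eqP /tau_inj e.
by move: (nj i); rewrite e eqxx.
Qed.

Lemma G_horn m (f : dmap m n) : G (im (act f tau)) -> in_horn kk f.
Proof.
move=> Gf; case: (boolP (in_horn kk f)) => // nh; exfalso; move/negP: nface; apply.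
apply: (Gd _ Gf); apply/subsetP => x; rewrite in_setD1 => /andP [xw xV].
move: xV; rewrite -im_tau => /imsetP [j _ xj].
have jk : j != kk by apply/negP => /eqP ejk; move: xw; rewrite xj ejk tau_k eqxx.
have : ~~ [forall i, proj1_sig f i != j].
  by apply/negP => hf; move/negP: nh; apply; apply/existsP; exists j; rewrite jk.
case/forallPn => i; rewrite negbK => /eqP fij.
by apply/imsetP; exists i => //; rewrite /= ffunE fij.
Qed.

Lemma step_ext : Ext G (fun U => G U || (U \subset V)).
Proof.
move=> psi N0.
case: kanK => [[_ lawc] fill].
have n0 : 0 < n by rewrite /n -ltnS prednK // ltnW.
pose h := fun m (f : dmap m n) (_ : in_horn kk f) => psi m (act f tau).
have hc : forall l m (g : dmap l m) (f : dmap m n) (p : in_horn kk f)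
            (p' : in_horn kk (dcomp f g)),
            h l (dcomp f g) p' = sact K g (h m f p).
  by move=> l m g f p p'; rewrite /h act_comp N0 //; exact: horn_G.
have [x Hx] := fill n kk n0 h hc.
have Hx' : forall m (f : dmap m n), G (im (act f tau)) -> psi m (act f tau) = sact K f x.
  by move=> m f Gf; rewrite -(Hx m f (G_horn Gf)).
pose psi' := fun m (s : chain m) =>
  if G (im s) then psi m s else if im s \subset V then sact K (fsd s) x else psi m s.
exists psi'; split; last by move=> m s Gs; rewrite /psi' Gs.
move=> m l f s /orP [Gs | sV].
  by rewrite /psi' Gs (Gd (im_act f s) Gs) N0.
rewrite /psi'; case Gs: (G (im s)); first by rewrite (Gd (im_act f s) Gs) N0.
rewrite sV; have fsV : im (act f s) \subset V := subset_trans (im_act f s) sV.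
case Gfs: (G (im (act f s))).
  by rewrite -{1}(act_fsd sV) -act_comp Hx' ?act_comp ?act_fsd // lawc.
rewrite fsV -lawc; congr (sact K _ x); apply: sig_eq.
rewrite /= fsd_val // fsd_val //; apply/ffunP => i.
by rewrite !ffunE /=; rewrite ?ffunE.
Qed.

End Step.

Section Matching.
Variables (G0 G1 : pred {set B}) (m : B).
Hypotheses (G0d : dclosed G0) (G1d : dclosed G1) (G01 : forall U, G0 U -> G1 U)
  (G0e : G0 set0) (G1t : forall U, G1 U -> tot U)
  (H5 : forall U, G1 U -> ~~ G0 U -> m \notin U -> G1 (m |: U))
  (H6 : forall U, G1 U -> ~~ G0 U -> m \in U -> ~~ G0 (U :\ m)).

Definition bigb (U : {set B}) := [&& G1 U, ~~ G0 U & m \in U].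
Let L := sort (fun V W : {set B} => #|V| <= #|W|) (enum [set V | bigb V]).
Let Gj j := fun U : {set B} => G0 U || has (fun V : {set B} => U \subset V) (take j L).

Lemma uniqL : uniq L.
Proof. by rewrite sort_uniq enum_uniq. Qed.

Lemma memL V : (V \in L) = bigb V.
Proof. by rewrite mem_sort mem_enum inE. Qed.

Lemma cardL i j : i <= j -> j < size L -> #|nth set0 L i| <= #|nth set0 L j|.
Proof.
move=> ij jL.
have tr : transitive (fun V W : {set B} => #|V| <= #|W|).
  by move=> a b c; apply: leq_trans.
have sL : sorted (fun V W : {set B} => #|V| <= #|W|) L.
  by apply: sort_sorted => a b; apply: leq_total.
apply: (sorted_leq_nth tr (fun a => leqnn _) set0 sL) => //; rewrite inE //.
exact: leq_ltn_trans jL.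
Qed.

Lemma Gj_d j : dclosed (Gj j).
Proof.
move=> U V UV /orP [G0V | /hasP [W Win VW]]; first by rewrite /Gj (G0d UV G0V).
by apply/orP; right; apply/hasP; exists W => //; apply: subset_trans VW.
Qed.

Lemma match_step j : j < size L -> Ext (Gj j) (Gj j.+1).
Proof.
move=> jL; set V := nth set0 L j.
have bV : bigb V by rewrite -memL mem_nth.
case/and3P: bV => G1V nG0V mV.
apply: (Ext_eq (G1 := fun U => Gj j U || (U \subset V))).
  move=> U; rewrite /Gj (take_nth set0 jL) has_rcons -/V.
  by case: (G0 U); case: (U \subset V); case: has.
apply: (step_ext (w := m)) => //.
- exact: Gj_d.
- exact: G1t.
- rewrite ltnNge; apply/negP => c1.
  have e : #|V :\ m| = 0.
    by move: c1; rewrite (cardsD1 m V) mV add1n ltnS leqn0 => /eqP.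
  by move: (H6 G1V nG0V mV); rewrite (cards0_eq e) G0e.
- move=> w' w'V w'm; set W := V :\ w'.
  have G1W : G1 W by apply: G1d G1V; apply: subsetDl.
  case G0W: (G0 W); first by rewrite /Gj G0W.
  have bW : bigb W by rewrite /bigb G1W G0W /= in_setD1 eq_sym w'm mV.
  have WL : W \in L by rewrite memL.
  have iL : index W L < size L by rewrite index_mem.
  have ij : index W L < j.
    rewrite ltnNge; apply/negP => ji.
    have := cardL ji iL; rewrite nth_index // -/V.
    by rewrite (cardsD1 w' V) w'V add1n ltnn.
  apply/orP; right; apply/hasP; exists W => //.
  have sz : index W L < size (take j L) by rewrite size_takel // ltnW.
  by rewrite -{1}(nth_index set0 WL) -(nth_take set0 ij) mem_nth.
- rewrite /Gj negb_or (H6 G1V nG0V mV) /=; apply/hasPn => V' V'in.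
  apply/negP => sub.
  have V'L : V' \in L by apply: mem_take V'in.
  have mV' : m \in V' by move: V'L; rewrite memL => /and3P [].
  case/(nthP set0): V'in => i; rewrite size_takel ?(ltnW jL) // => ij.
  rewrite nth_take // => eV'.
  have VV' : V \subset V'.
    apply/subsetP => x xV; case: (eqVneq x m) => [-> // | xm].
    by apply: (subsetP sub); rewrite in_setD1 xm.
  have cV : #|V'| <= #|V| by rewrite -eV'; apply: cardL; rewrite // ltnW.
  have eVV : V = V' by apply/eqP; rewrite eqEcard VV' cV.
  move: eV'; rewrite -eVV /V => /eqP; rewrite nth_uniq ?uniqL //.
    by move/eqP => eij; move: ij; rewrite eij ltnn.
  exact: ltn_trans jL.
Qed.

Lemma match_ext : Ext G0 G1.
Proof.
have H : forall j, j <= size L -> Ext G0 (Gj j).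
  elim => [_ | j IH jL].
    have E := Ext_refl (G := G0); move: E; apply: Ext_eq => U.
    by rewrite /Gj take0 /= orbF.
  apply: Ext_trans (IH (ltnW jL)) (match_step jL).
  by move=> U G0U; rewrite /Gj G0U.
apply: (Ext_eq _ (H _ (leqnn _))) => U; rewrite /Gj take_size.
apply/idP/idP => [/orP [/G01 // | /hasP [V VL UV]] | G1U].
  by apply: G1d UV _; move: VL; rewrite memL => /and3P [].
case G0U: (G0 U) => //=; apply/hasP.
case mU: (m \in U).
  by exists U => //; rewrite memL /bigb G1U G0U mU.
exists (m |: U); last exact: (subsetUr [set m] U).
rewrite memL /bigb H5 ?G0U ?mU // setU11 andbT /=.
by apply/negP => /(G0d (subsetUr [set m] U)); rewrite G0U.
Qed.

End Matching.


Definition beat (S : {set B}) (x m : B) :=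
  (le m x && [forall y in S, le y x ==> le y m]) ||
  (le x m && [forall y in S, le x y ==> le m y]).

Inductive dism : {set B} -> Prop :=
| dism1 p : p != top -> dism [set p]
| dismS S x m : dism S -> x \notin S -> x != top -> m \in S -> beat S x m -> dism (x |: S).

Definition GS (X : {set B}) : pred {set B} := fun U => tot U && (U \subset X).

Lemma tot_sub (U V : {set B}) : U \subset V -> tot V -> tot U.
Proof.
move=> /subsetP UV /totP tV; apply/totP => a b aU bU; apply: tV; exact: UV.
Qed.

Lemma GS_d X : dclosed (GS X).
Proof.
move=> U V UV /andP [tV VX]; rewrite /GS (tot_sub UV tV) /=.
exact: subset_trans VX.
Qed.

Lemma GS_mono (X Y U : {set B}) : X \subset Y -> GS X U -> GS Y U.
Proof. by move=> XY /andP [tU UX]; rewrite /GS tU (subset_trans UX XY). Qed.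

Lemma subD1 (U X : {set B}) m : U :\ m \subset X -> m \in X -> U \subset X.
Proof.
move=> /subsetP sub mX; apply/subsetP => y yU; case: (eqVneq y m) => [-> // | ym].
by apply: sub; rewrite in_setD1 ym.
Qed.

Lemma tot_U1 (U : {set B}) m : tot U -> (forall y, y \in U -> le m y || le y m) ->
  tot (m |: U).
Proof.
move=> /totP tU H; apply/totP => a b; rewrite !in_setU1.
case/orP => [/eqP -> | aU]; case/orP => [/eqP -> | bU].
- by rewrite le_refl.
- exact: H.
- by rewrite orbC; apply: H.
- exact: tU.
Qed.

Lemma dism_top S : dism S -> top \notin S.
Proof.
elim => [p pt | S' x m _ IH xS xt _ _]; first by rewrite in_set1 eq_sym.
by rewrite in_setU1 negb_or eq_sym xt.
Qed.

Lemma cone_ext S0 (dS0 : dism S0) : Ext (GS S0) (GS (top |: S0)).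
Proof.
elim: S0 / dS0 => [p pt | S x m dS IH xS xt mS bt].
  apply: (match_ext (m := p)).
  - exact: GS_d.
  - exact: GS_d.
  - move=> U /andP [tU sU]; rewrite /GS tU; apply: subset_trans sU _.
    exact: subsetUr.
  - by rewrite /GS sub0set andbT; apply/totP => a b; rewrite in_set0.
  - by move=> U /andP [].
  - move=> U /andP [tU sU] nG pU; rewrite /GS; apply/andP; split.
      apply: tot_U1 => // y yU; move/subsetP: sU => /(_ y yU).
      rewrite !inE => /orP [/eqP -> | /eqP yp]; first by rewrite le_top.
      by move: pU; rewrite -yp yU.
    by rewrite subUset sU andbT sub1set !inE eqxx orbT.
  - move=> U /andP [tU sU] nG pU; apply/negP => /andP [_ s1].
    by move: nG; rewrite /GS tU (subD1 s1) // inE.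
move=> psi N.
have NS : natural_on (GS S) psi.
  move=> k l f s Gs; apply: N; apply: GS_mono Gs; exact: subsetUr.
have [psi1 [N1 A1]] := IH psi NS.
pose psi2 := fun n (s : chain n) => if GS (x |: S) (im s) then psi n s else psi1 n s.
have N2 : natural_on (fun U => GS (x |: S) U || GS (top |: S) U) psi2.
  move=> k l f s /orP [Gs | Gs].
    by rewrite /psi2 Gs (GS_d (im_act f s) Gs) N.
  rewrite /psi2; case Gs': (GS (x |: S) (im s)).
    by rewrite (GS_d (im_act f s) Gs') N.
  case Gf: (GS (x |: S) (im (act f s))); last exact: N1.
  rewrite A1; first exact: N1.
  case/andP: Gf => tf sf; case/andP: (GS_d (im_act f s) Gs) => _ sf'.
  rewrite /GS tf; apply/subsetP => y yf.
  move/subsetP: sf => /(_ y yf); move/subsetP: sf' => /(_ y yf).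
  rewrite !in_setU1 => /orP [/eqP -> | //]; rewrite eq_sym (negbTE xt) /=.
  by [].
have E : Ext (fun U => GS (x |: S) U || GS (top |: S) U) (GS (top |: (x |: S))).
apply: (match_ext (m := m)).
- by move=> U V UV /orP [h | h]; apply/orP; [left | right]; apply: GS_d h.
- exact: GS_d.
- move=> U /orP [] /andP [tU sU]; rewrite /GS tU; apply: subset_trans sU _.
    exact: subsetUr.
  by apply/subsetP => y; rewrite !in_setU1 => /orP [-> | ->]; rewrite ?orbT.
- by rewrite /GS !sub0set !andbT; apply/orP; left; apply/totP => a b; rewrite in_set0.
- by move=> U /andP [].
- move=> U /andP [tU sU]; rewrite negb_or /GS tU /= => /andP [nx nt] mU.
  have xU : x \in U.
    case/subsetPn: nt => y yU ny; move/subsetP: sU => /(_ y yU).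
    rewrite !in_setU1; move: ny; rewrite in_setU1 negb_or => /andP [/negbTE -> /negbTE ->].
    by rewrite orbF => /eqP <-.
  apply/andP; split.
    apply: tot_U1 => // y yU; move/subsetP: sU => /(_ y yU).
    rewrite !in_setU1 => /orP [/eqP -> | ]; first by rewrite le_top.
    case/orP: bt => /andP [l1 /forallP hb].
      case/orP => [/eqP -> | yS]; first by rewrite l1.
      move/totP: tU => /(_ y x yU xU) /orP [yx | xy].
        by move/implyP: (hb y) => /(_ yS) /implyP /(_ yx) ->; rewrite orbT.
      by rewrite (le_trans l1 xy).
    case/orP => [/eqP -> | yS]; first by rewrite l1 orbT.
    move/totP: tU => /(_ y x yU xU) /orP [yx | xy].
      by rewrite (le_trans yx l1) orbT.
    by move/implyP: (hb y) => /(_ yS) /implyP /(_ xy) ->.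
  by rewrite subUset sU andbT sub1set !in_setU1 mS !orbT.
- move=> U /andP [tU sU]; rewrite negb_or /GS tU /= => /andP [nx nt] mU.
  rewrite negb_or; apply/andP; split; apply/negP => /andP [_ s1].
    by move: nx; rewrite (subD1 s1) // in_setU1 mS orbT.
  by move: nt; rewrite (subD1 s1) // in_setU1 mS orbT.
have [psi3 [N3 A3]] := E psi2 N2.
- exists psi3; split => // n s Gs.
  rewrite -A3; last by rewrite Gs.
  by rewrite /psi2 Gs.
Qed.

End Chains.

Lemma tot_im (B : finType) (le : rel B) n (s : chain le n) : tot le (im s).
Proof.
apply/totP => a b /imsetP [i _ ->] /imsetP [j _ ->].
case: (leqP i j) => [ij | /ltnW ji]; first by rewrite (chain_mono s ij).
by rewrite (chain_mono s ji) orbT.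
Qed.

Section Transfer.
Variable C : Defs.cat.
Variable B : finType.
Variable le : rel B.
Variable top : B.
Hypothesis le_refl : reflexive le.
Hypothesis le_trans : transitive le.
Hypothesis le_anti : antisymmetric le.
Hypothesis le_top : forall b, le b top.
Variable o : ob C -> B.
Hypothesis o_inj : forall x y, o x = o y -> x = y.
Hypothesis hom_le : forall x y, hom C x y -> le (o x) (o y).
Hypothesis le_hom : forall x y, le (o x) (o y) -> hom C x y.
Hypothesis hom_uniq : forall x y (f g : hom C x y), f = g.
Variable S : {set B}.
Hypothesis S_o : forall b, b \in S <-> exists x, o x = b.
Hypothesis dS : dism le top S.
Variable x0 : ob C.

Lemma nsimp_eq n (x y : nsimp C n) : (forall i, nob x i = nob y i) -> x = y.
Proof.
case: x => ox mx m1x mMx; case: y => oy my m1y mMy /= e.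
have eo : ox = oy by apply: functional_extensionality.
subst oy.
have em : mx = my.
  apply: functional_extensionality_dep => i; apply: functional_extensionality_dep => j.
  apply: functional_extensionality_dep => h; exact: hom_uniq.
subst my; f_equal; apply: proof_irrelevance.
Qed.

Definition pt_simp (c : ob C) : nsimp C 0.
Proof.
refine (@NSimp C 0 (fun _ => c) (fun _ _ _ => idm C c) _ _) => // *; by rewrite cmp1l.
Defined.

Lemma lift_ex n (s : chain le n) : im s \subset S ->
  exists x : nsimp C n, forall i, o (nob x i) = proj1_sig s i.
Proof.
move=> /subsetP sS.
have ex : forall i, {c : ob C | o c = proj1_sig s i}.
  move=> i; apply: constructive_indefinite_description; apply/S_o.
  by apply: sS; apply/imsetP; exists i.
pose ob_ i := proj1_sig (ex i).
have eo : forall i, o (ob_ i) = proj1_sig s i by move=> i; exact: proj2_sig (ex i).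
have lm : forall i j : 'I_n.+1, i <= j -> le (o (ob_ i)) (o (ob_ j)).
  by move=> i j h; rewrite !eo; apply: chain_mono.
exists (@NSimp C n ob_ (fun i j h => le_hom (lm i j h)) (fun i h => hom_uniq _ _)
  (fun i j k hij hjk hik => hom_uniq _ _)).
exact: eo.
Qed.

Lemma wcontr_transfer : wcontr (nerve C).
Proof.
split; first by constructor; exact: pt_simp x0.
move=> K kanK phi.
case: (kanK) => [[_ lawc] _].
pose junk n : sx K n := sact K (@dconst n 0 ord0) (proj1_sig phi 0 (pt_simp x0)).
pose psi := fun n (s : chain le n) =>
  match excluded_middle_informative
      (exists x : nsimp C n, forall i, o (nob x i) = proj1_sig s i) with
  | left h => proj1_sig phi n (proj1_sig (constructive_indefinite_description _ h))
  | right _ => junk n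
  end.
have psi_spec : forall n (s : chain le n) (x : nsimp C n),
    (forall i, o (nob x i) = proj1_sig s i) -> psi n s = proj1_sig phi n x.
  move=> n s x hx; rewrite /psi; case: excluded_middle_informative => [h | []].
    case: constructive_indefinite_description => y hy /=; congr (proj1_sig phi n _).
    by apply: nsimp_eq => i; apply: o_inj; rewrite hx hy.
  by exists x.
have N : natural_on (GS le S) psi.
  move=> m n f s /andP [_ sS]; have [x hx] := lift_ex sS.
  rewrite (psi_spec _ _ x hx).
  rewrite (psi_spec _ _ (nact f x)); first exact: (proj2_sig phi).
  by move=> i; rewrite /= ffunE hx.
have [psi' [N' A']] := cone_ext le_refl le_trans le_anti le_top kanK dS N.
have topc : monoc le [ffun _ : 'I_1 => top].
  by apply/monocP => i j _; rewrite !ffunE.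
pose tc : chain le 0 := exist (fun s => monoc le s) _ topc.
exists (psi' 0 tc).
pose cc := fun n (x : nsimp C n) (u : dmap n 1) =>
  [ffun i => if proj1_sig u i == ord0 then o (nob x i) else top].
have ccm : forall n x u, monoc le (@cc n x u).
  move=> n x u; apply/monocP => i j ij; rewrite !ffunE.
  have uij := dmap_mono u ij.
  case: (eqVneq (proj1_sig u j) ord0) => [ej | nj]; last by rewrite le_top.
  have ei0 : (proj1_sig u i : nat) = 0 by move: uij; rewrite ej leqn0 => /eqP.
  have ei : proj1_sig u i == ord0 by apply/eqP; apply: val_inj.
  rewrite ei; exact: hom_le (nmor x ij).
pose ch := fun n x u => exist (fun s => monoc le s) _ (@ccm n x u) : chain le n.
have Gc : forall n x u, GS le (top |: S) (im (@ch n x u)).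
  move=> n x u; rewrite /GS tot_im /=; apply/subsetP => b /imsetP [i _ ->].
  rewrite /= ffunE; case: eqP => _; last by rewrite setU11.
  by rewrite in_setU1; apply/orP; right; apply/S_o; eexists.
exists (fun n x u => psi' n (ch n x u)); split; [|split].
- move=> m n a x u /=.
  have -> : ch m (nact a x) (dcomp u a) = act a (ch n x u).
    by apply: chain_eq => i; rewrite /= !ffunE.
  exact: N'.
- move=> n x /=.
  rewrite -A'; last first.
    rewrite /GS tot_im /=; apply/subsetP => b /imsetP [i _ ->].
    by rewrite /= !ffunE /=; apply/S_o; eexists.
  by apply: psi_spec => i; rewrite /= !ffunE.
- move=> n x /=.
  have -> : ch n x (@dconst n 1 ord_max) = act (@dconst n 0 ord0) tc.
    by apply: chain_eq => i; rewrite /= !ffunE.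
  apply: N'; rewrite /GS tot_im /=; apply/subsetP => b /imsetP [i _ ->].
  by rewrite /= ffunE setU11.
Qed.

End Transfer.

Fixpoint lexlt (a b : seq nat) : bool :=
  match a, b with
  | [::], [::] => false
  | [::], _ :: _ => true
  | _ :: _, [::] => false
  | x :: a', y :: b' => (x < y) || ((x == y) && lexlt a' b')
  end.

Lemma lexlt_irr a : lexlt a a = false.
Proof. by elim: a => //= x a ->; rewrite ltnn andbF. Qed.

Lemma lexlt_trans a b c : lexlt a b -> lexlt b c -> lexlt a c.
Proof.
elim: a b c => [|x a IH] [|y b] [|z c] //=.
case/orP => [xy | /andP [/eqP -> ab]]; case/orP => [yz | /andP [/eqP <- bc]].
- by rewrite (ltn_trans xy yz).
- by rewrite xy.
- by rewrite yz.
- by rewrite eqxx (IH _ _ ab bc) orbT.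
Qed.

Lemma lexlt_total a b : a != b -> lexlt a b || lexlt b a.
Proof.
elim: a b => [|x a IH] [|y b] //=.
case: (ltngtP x y) => //= -> /=; rewrite eqseq_cons eqxx /=; exact: IH.
Qed.

Section Dism.
Variable B : finType.
Variable le : rel B.
Variable top : B.
Hypothesis le_refl : reflexive le.
Hypothesis le_trans : transitive le.
Hypothesis le_anti : antisymmetric le.

Lemma ex_max (r : rel B) (s : seq B) : transitive r -> irreflexive r -> s != [::] ->
  exists2 x, x \in s & forall y, y \in s -> ~~ r x y.
Proof.
move=> rt ri; elim: s => [//|a s IH] _.
case: (eqVneq s [::]) => [-> | sn].
  by exists a; rewrite ?inE // => y; rewrite inE => /eqP ->; rewrite ri.
have [x xs hx] := IH sn.
case rxa: (r x a).
  exists a; first by rewrite inE eqxx.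
  move=> y; rewrite inE => /orP [/eqP -> | ys]; first by rewrite ri.
  by apply/negP => ray; move: (hx y ys); rewrite (rt _ _ _ rxa ray).
exists x; first by rewrite inE xs orbT.
by move=> y; rewrite inE => /orP [/eqP -> | ys]; [rewrite rxa | exact: hx].
Qed.

Lemma ex_max_set (r : rel B) (S : {set B}) y0 : transitive r -> irreflexive r -> y0 \in S ->
  exists2 x, x \in S & forall y, y \in S -> ~~ r x y.
Proof.
move=> rt ri yS; have [|x xs hx] := ex_max (s := enum S) rt ri.
  by apply/negP => /eqP e; move: (mem_enum S y0); rewrite e yS.
by exists x; [rewrite -mem_enum | move=> y; rewrite -mem_enum; exact: hx].
Qed.

Lemma dism_key (kf : B -> seq nat) (p : B -> B) x0 : forall S : {set B},
  x0 \in S -> top \notin S -> {in S &, injective kf} ->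
  (forall x, x \in S -> x != x0 -> [/\ p x \in S, lexlt (kf (p x)) (kf x) &
       beat le [set y in S | lexlt (kf y) (kf x)] x (p x)]) -> dism le top S.
Proof.
move=> S; move: {-1}#|S| (leqnn #|S|) => n; elim: n S => [|n IH] S cS x0S tS kinj hS.
  by move: cS; rewrite leqn0 => /eqP/cards0_eq e; move: x0S; rewrite e inE.
case: (eqVneq S [set x0]) => [-> | Sne].
  by apply: dism1; apply/negP => /eqP e; move: tS; rewrite -e x0S.
have rt : transitive (fun a b : B => lexlt (kf a) (kf b)).
  by move=> a b c; apply: lexlt_trans.
have rti : transitive (fun a b : B => lexlt (kf b) (kf a)).
  by move=> a b c h1 h2; apply: lexlt_trans h2 h1.
have ri : irreflexive (fun a b : B => lexlt (kf a) (kf b)) by move=> a; exact: lexlt_irr.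
have rii : irreflexive (fun a b : B => lexlt (kf b) (kf a)) by move=> a; exact: lexlt_irr.
have lt_of : forall a b, a \in S -> b \in S -> a != b -> ~~ lexlt (kf b) (kf a) ->
    lexlt (kf a) (kf b).
  move=> a b aS bS ab nba; have : kf a != kf b.
    by apply/negP => /eqP /kinj e; move: ab; rewrite e ?eqxx.
  by move/lexlt_total; rewrite (negbTE nba) orbF.
have [x xS xmax] := ex_max_set rt ri x0S.
have [z zS zmin] := ex_max_set rti rii x0S.
have z0 : z = x0.
  apply/eqP; apply/negP => /negP zx0; have [pS plt _] := hS z zS zx0.
  by move: (zmin _ pS); rewrite plt.
have yS0 : exists2 y, y \in S & y != x0.
  case: (boolP [exists y in S, y != x0]) => [/exists_inP [y ? ?] | /exists_inPn hn].
    by exists y.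
  case/negP: Sne; rewrite eqEsubset sub1set x0S andbT; apply/subsetP => y yS.
  by rewrite inE; move: (hn y yS); rewrite negbK.
have xx0 : x != x0.
  case: yS0 => y yS1 yx0; apply/negP => /eqP ex.
  have h1 : lexlt (kf x0) (kf y).
    by apply: lt_of => //; [rewrite eq_sym | rewrite -z0; exact: zmin y yS1].
  by move: (xmax y yS1); rewrite ex h1.
have below : forall y, y \in S -> y != x -> lexlt (kf y) (kf x).
  by move=> y yS yx; apply: lt_of => //; apply: xmax.
set S' := S :\ x.
have eS : S = x |: S' by rewrite setD1K.
have pref : forall y, y \in S' -> [set z in S' | lexlt (kf z) (kf y)] =
                                   [set z in S | lexlt (kf z) (kf y)].
  move=> y; rewrite in_setD1 => /andP [yx yS']; apply/setP => u; rewrite !inE.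
  case: (eqVneq u x) => [-> | ux]; last by rewrite ?ux.
  by rewrite ?eqxx /= xS (negbTE (xmax y yS')).
have prefx : S' = [set z in S | lexlt (kf z) (kf x)].
  apply/setP => u; rewrite !inE; case: (eqVneq u x) => [-> | ux].
    by rewrite lexlt_irr andbF.
  rewrite /=; apply/idP/idP => [uS | /andP [] //]; by rewrite uS below.
rewrite eS; have [pS plt pb] := hS x xS xx0.
apply: (dismS (m := p x)).
- apply: IH.
  + by move: cS; rewrite eS cardsU1 in_setD1 eqxx /= add1n ltnS.
  + by rewrite in_setD1 eq_sym xx0.
  + by apply: contra tS; rewrite in_setD1 => /andP [].
  + by move=> a b; rewrite !in_setD1 => /andP [_ aS] /andP [_ bS]; apply: kinj.
  + move=> y yS' yx0; rewrite pref //; move: yS'; rewrite in_setD1 => /andP [yx yS].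
    have [pyS pylt pyb] := hS y yS yx0; split => //.
    rewrite in_setD1 pyS andbT; apply/negP => /eqP e.
    by move: (xmax y yS); rewrite -e pylt.
- by rewrite in_setD1 eqxx.
- by apply/negP => /eqP e; move: tS; rewrite -e xS.
- rewrite in_setD1 pS andbT; apply/negP => /eqP e; move: plt; rewrite e.
  by rewrite lexlt_irr.
- by rewrite prefx.
Qed.

Lemma dism_bot (b : B) : forall S : {set B}, b \in S -> top \notin S ->
  (forall y, y \in S -> le b y) -> dism le top S.
Proof.
move=> S; move: {-1}#|S| (leqnn #|S|) => n; elim: n S => [|n IH] S cS bS tS hb.
  by move: cS; rewrite leqn0 => /eqP/cards0_eq e; move: bS; rewrite e inE.
case: (eqVneq S [set b]) => [-> | Sne].
  by apply: dism1; apply/negP => /eqP e; move: tS; rewrite -e bS.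
have [y yS] : exists y, y \in S :\ b.
  case: (boolP [exists y, y \in S :\ b]) => [/existsP // | /existsPn hn].
  case/negP: Sne; rewrite eqEsubset sub1set bS andbT; apply/subsetP => y yS.
  by rewrite inE; move: (hn y); rewrite in_setD1 yS andbT negbK.
pose dn x := #|[set z in S | le z x]|.
case: (arg_minnP dn yS) => x xSb xmin.
have xSb2 : x \in S :\ b := xSb; move: xSb2; rewrite in_setD1 => /andP [xb xS].
set S' := S :\ x.
have eS : S = x |: S' by rewrite setD1K.
rewrite eS; apply: (dismS (m := b)).
- apply: IH.
  + by move: cS; rewrite eS cardsU1 in_setD1 eqxx /= add1n ltnS.
  + by rewrite in_setD1 bS andbT eq_sym.
  + by apply: contra tS; rewrite in_setD1 => /andP [].
  + by move=> u; rewrite in_setD1 => /andP [_ /hb].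
- by rewrite in_setD1 eqxx.
- by apply/negP => /eqP e; move: tS; rewrite -e xS.
- by rewrite in_setD1 bS andbT eq_sym.
- apply/orP; left; rewrite hb //=; apply/forallP => z; apply/implyP => zS'.
  apply/implyP => zx; move: zS'; rewrite in_setD1 => /andP [zx' zS].
  case: (eqVneq z b) => [-> | zb]; first exact: le_refl.
  have zSb : z \in S :\ b by rewrite in_setD1 zb.
  have := xmin z zSb; rewrite leqNgt => /negP; case.
  rewrite /dn; apply: proper_card; rewrite properE; apply/andP; split.
    apply/subsetP => u; rewrite !inE => /andP [-> uz] /=.
    exact: le_trans uz zx.
  apply/subsetPn; exists x; first by rewrite inE xS le_refl.
  rewrite inE xS /=; apply/negP => xz.
  have e : z = x by apply: le_anti; rewrite zx xz.
  by move: zx'; rewrite e eqxx.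
Qed.

End Dism.

Definition tree_ind' (P : tree -> Prop)
  (H : forall ts, (forall i, i < size ts -> P (nth (Node [::]) ts i)) -> P (Node ts)) :
  forall t, P t :=
  fix F (t : tree) : P t :=
    match t with
    | Node ts => H ts ((fix G (l : seq tree) :
          forall i, i < size l -> P (nth (Node [::]) l i) :=
        match l return forall i, i < size l -> P (nth (Node [::]) l i) with
        | [::] => fun i hi => False_ind _ (Bool.diff_false_true hi)
        | t0 :: l' => fun i =>
            match i return i < size (t0 :: l') -> P (nth (Node [::]) (t0 :: l') i) with
            | 0 => fun _ => F t0
            | i'.+1 => fun hi => G l' i' hi
            end
        end) ts)
    end.

Fixpoint cells_enum (t : tree) : seq (seq nat) :=
  let: Node ts := t in
  [seq [:: j] | j <- iota 0 (size ts).+1] ++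
  (fix aux (i : nat) (l : seq tree) : seq (seq nat) :=
     match l with
     | [::] => [::]
     | t0 :: l' => [seq i :: c | c <- cells_enum t0] ++ aux i.+1 l'
     end) 0 ts.

Fixpoint aux_cells (f : tree -> seq (seq nat)) (i : nat) (l : seq tree) : seq (seq nat) :=
  match l with
  | [::] => [::]
  | t0 :: l' => [seq i :: c | c <- f t0] ++ aux_cells f i.+1 l'
  end.

Lemma cells_enumE ts : cells_enum (Node ts) =
  [seq [:: j] | j <- iota 0 (size ts).+1] ++ aux_cells cells_enum 0 ts.
Proof.
rewrite /=; congr (_ :: _ ++ _); move: 0; elim: ts => //= t0 l IH i.
by rewrite IH.
Qed.

Lemma aux_mem f l k j c : j < size l -> c \in f (nth (Node [::]) l j) ->
  (k + j) :: c \in aux_cells f k l.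
Proof.
elim: l k j => [//|t0 l IH] k [|j] /= jl hin; rewrite mem_cat.
  by rewrite addn0; apply/orP; left; apply/mapP; exists c.
by rewrite addnS -addSn IH ?orbT.
Qed.

Lemma cells_enumP t c : is_cell c t -> c \in cells_enum t.
Proof.
elim/tree_ind': t c => ts IH c.
case: c => [//|j [|j' c']].
  move=> hj; have {}hj : j <= size ts := hj.
  rewrite cells_enumE mem_cat; apply/orP; left.
  by apply/mapP; exists j; rewrite // mem_iota.
move=> hc0; have {hc0} /andP [jts hc] : (j < size ts) && is_cell (j' :: c') (nth (Node [::]) ts j) := hc0.
rewrite cells_enumE mem_cat; apply/orP; right.
have := IH j jts (j' :: c') hc.
by rewrite -{1}[j]add0n; apply: aux_mem.
Qed.

Definition lec (c d : seq nat) : bool := [|| c == d, valid GSrc c d | valid GTgt c d].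

Lemma lecP c d : reflect (exists g, valid g c d) (lec c d).
Proof.
apply: (iffP idP) => [/or3P [e | e | e] | [[] e]]; first by exists GId.
- by exists GSrc.
- by exists GTgt.
- by apply/or3P; exact: Or31 e.
- by apply/or3P; exact: Or32 e.
- by apply/or3P; exact: Or33 e.
Qed.

Lemma lec_refl : reflexive lec.
Proof. by move=> c; rewrite /lec eqxx. Qed.

Lemma lec_trans : transitive lec.
Proof.
move=> b a c /lecP [f vf] /lecP [g vg]; apply/lecP.
by exists (glab_cmp g f); apply: valid_cmp vf vg.
Qed.

Lemma valid_size g c d : valid g c d -> size c <= size d /\ (size c = size d -> g = GId).
Proof.
case: g => /=; first by move/eqP ->; rewrite leqnn.
all: by case/andP => lt _; split; [exact: ltnW | move=> e; move: lt; rewrite e ltnn].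
Qed.

Lemma lec_anti : antisymmetric lec.
Proof.
move=> c d /andP [/lecP [f vf] /lecP [g vg]].
have [s1 i1] := valid_size vf; have [s2 i2] := valid_size vg.
have e : size c = size d by apply/eqP; rewrite eqn_leq s1 s2.
by move: vf; rewrite (i1 e) => /eqP.
Qed.

Lemma valid_uniq g g' c d : valid g c d -> valid g' c d -> g = g'.
Proof.
have bF : forall m (x : seq nat), bnd false m x != bnd true m x.
  move=> m x; rewrite /bnd; apply/negP => /eqP /(congr1 (fun s => last 0 s)).
  by rewrite !last_rcons addn0 addn1 => /n_Sn.
case: g; case: g' => //=.
all: first [ move=> /eqP e /andP [lt _]; by move: lt; rewrite e ltnn
           | move=> /andP [lt _] /eqP e; by move: lt; rewrite e ltnn
           | move=> /andP [_ /eqP e1] /andP [_ /eqP e2];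
             by move: (bF (size c).-1 d); rewrite -?e1 -?e2 eqxx ].
Qed.

Lemma bnd_consi b k i y : bnd b k.+1 (i :: y) = i :: bnd b k y.
Proof. by []. Qed.

Lemma F1 j j' : lec [:: j] [:: j'] = (j == j').
Proof. by rewrite /lec /= orbF eqseq_cons andbT. Qed.

Lemma F2 j i d : d != [::] -> lec [:: j] (i :: d) = (j == i) || (j == i.+1).
Proof.
case: d => // y d _; rewrite /lec /= /bnd /= addn0 addn1 !eqseq_cons !andbT.
by rewrite andbF. Qed.

Lemma F3 i c j : c != [::] -> lec (i :: c) [:: j] = false.
Proof. by case: c => // y c _; rewrite /lec /= orbF eqseq_cons /= andbF. Qed.

Lemma F4 i c i' d : c != [::] -> d != [::] ->
  lec (i :: c) (i' :: d) = (i == i') && lec c d.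
Proof.
case: c => // y c _ dn; rewrite /lec /= ltnS !bnd_consi !eqseq_cons.
by case: (i == i'); rewrite /= ?andbF.
Qed.

Fixpoint key (c : seq nat) : seq nat :=
  match c with
  | [::] => [::]
  | [:: j] => [:: 0; j.*2]
  | i :: c' => if c' == [:: 0] then [:: 0; i.*2.+1] else 1 :: i :: key c'
  end.

Fixpoint partner (c : seq nat) : seq nat :=
  match c with
  | [::] => [::]
  | [:: j] => [:: j.-1; 0]
  | i :: c' => if c' == [:: 0] then [:: i] else i :: partner c'
  end.

Lemma key_cons i c : c != [::] -> key (i :: c) =
  if c == [:: 0] then [:: 0; i.*2.+1] else 1 :: i :: key c.
Proof. by case: c. Qed.

Lemma partner_cons i c : c != [::] -> partner (i :: c) =
  if c == [:: 0] then [:: i] else i :: partner c.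
Proof. by case: c. Qed.

Lemma key_pos c : c != [::] -> c != [:: 0] -> lexlt [:: 0; 0] (key c).
Proof.
case: c => // i [|y c] _ /=.
  by rewrite eqseq_cons andbT => i0; rewrite double_gt0 lt0n i0.
by case: ifP.
Qed.

Lemma key_inj c d : c != [::] -> d != [::] -> key c = key d -> c = d.
Proof.
elim: c d => [//|i c IH] d _ dn.
case: d dn => [//|i' d] _.
case: (eqVneq c [::]) => [-> | cn]; case: (eqVneq d [::]) => [-> | dn].
- by case=> /(congr1 half); rewrite !doubleK => ->.
- rewrite (key_cons _ dn) /=; case: ifP => _ // [] e; have := congr1 odd e.
  by rewrite odd_double /= odd_double.
- rewrite (key_cons _ cn) /=; case: ifP => _ // [] e; have := congr1 odd e.
  by rewrite odd_double /= odd_double.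
- rewrite (key_cons _ cn) (key_cons _ dn).
  case: ifP => [/eqP e1 | n1]; case: ifP => [/eqP e2 | n2] //.
  + by case=> /(congr1 half); rewrite !doubleK => ->; rewrite e1 e2.
  + by case=> -> /(IH _ cn dn) ->.
Qed.

Lemma cell_nil c t : is_cell c t -> c != [::].
Proof. by case: c. Qed.

Lemma is_cell_cons i c ts : c != [::] ->
  is_cell (i :: c) (Node ts) = (i < size ts) && is_cell c (nth (Node [::]) ts i).
Proof. by case: c. Qed.

Lemma key_loc j y c : y != [::] -> c != [::] -> c != [:: 0] ->
  lexlt (key (j :: y)) (1 :: j :: key c) -> lexlt (key y) (key c).
Proof.
move=> yn cn c0; rewrite (key_cons _ yn); case: ifP => [/eqP -> _ | _].
  exact: key_pos.
by rewrite /= ltnn eqxx /=.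
Qed.

Lemma beat_tree t c : is_cell c t -> c != [:: 0] ->
  [/\ is_cell (partner c) t, lexlt (key (partner c)) (key c) &
   (lec (partner c) c /\ (forall y, is_cell y t -> lexlt (key y) (key c) ->
                            lec y c -> lec y (partner c))) \/
   (lec c (partner c) /\ (forall y, is_cell y t -> lexlt (key y) (key c) ->
                            lec c y -> lec (partner c) y))].
Proof.
elim/tree_ind': t c => ts IH c.
case: c => [//|j c'] hc nc.
case: (eqVneq c' [::]) => [ec | cn].
  subst c'; have {}hc : j <= size ts := hc.
  have j0 : 0 < j by rewrite lt0n; apply: contra nc => /eqP ->.
  have ej : j = j.-1.+1 by rewrite prednK.
  split.
  - by rewrite /= andbT -ltnS -ej.
  - by rewrite /= andbF orbF {2}ej doubleS ltnSn.
  - right; split; first by rewrite F2 // -ej eqxx orbT.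
    case => [//|i [|z y']] hy.
      rewrite F1 => lt /eqP ei; move: lt; rewrite ei.
      by rewrite lexlt_irr.
    rewrite (@key_cons i (z :: y') isT); case: ifP => [/eqP e0 | _]; last by [].
    rewrite e0 /= andbF orbF F2 // => lij /orP [/eqP eji | /eqP eji].
      by move: lij; rewrite eji ltnNge leqnSn.
    by rewrite eji /= lec_refl.
move: hc; rewrite is_cell_cons // => /andP [jts hc'].
case: (eqVneq c' [:: 0]) => [e0 | n0].
  subst c'; split.
  - by rewrite /= ltnW.
  - by rewrite /= ltnSn.
  - left; split; first by rewrite F2 // eqxx.
    case => [//|i [|z y']] hy.
      rewrite F2 // => lt /orP [/eqP -> | /eqP ei]; first exact: lec_refl.
      by move: lt; rewrite ei /= andbF orbF doubleS ltnNge ltnW.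
    rewrite F4 // => lt /andP [/eqP eij].
    case: y' hy lt => [|w y'] hy lt.
      by rewrite F1 => /eqP ez; move: lt; rewrite eij ez lexlt_irr.
    by rewrite F3.
have [pc plt pb] := IH j jts c' hc' n0.
have pn := cell_nil pc.
rewrite (partner_cons _ cn) (negbTE n0) (key_cons _ cn) (negbTE n0).
split.
- by rewrite is_cell_cons // jts.
- rewrite (key_cons _ pn); case: ifP => _ //.
  by rewrite /= ?ltnn ?eqxx /= ?ltnn ?eqxx.
- case: pb => [[l1 H1] | [l1 H1]].
    left; split; first by rewrite F4 // eqxx.
    case => [//|i [|z y']] hy lt.
      by rewrite !F2.
    rewrite !F4 // => /andP [/eqP eij ly]; rewrite eij eqxx /=.
    move: hy lt; rewrite is_cell_cons // eij => /andP [_ hy] lt.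
    by apply: H1 => //; apply: key_loc lt.
  right; split; first by rewrite F4 // eqxx.
  case => [//|i [|z y']] hy lt.
    by rewrite !F3.
  rewrite !F4 // => /andP [/eqP eij ly]; rewrite -eij eqxx /=.
  move: hy lt; rewrite is_cell_cons // -eij => /andP [_ hy] lt.
  by apply: H1 => //; apply: key_loc lt.
Qed.

Lemma el_hom_uniq T (x y : el_ob T) (f g : el_hom x y) : f = g.
Proof. apply: sig_eq; exact: valid_uniq (proj2_sig f) (proj2_sig g). Qed.

Definition glab_of (c d : seq nat) : glab :=
  if c == d then GId else if valid GSrc c d then GSrc else GTgt.

Lemma glab_ofP c d : lec c d -> valid (glab_of c d) c d.
Proof.
rewrite /lec /glab_of; case: eqP => [-> _ | _] /=; first exact: eqxx.
by case: ifP.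
Qed.

Definition lec_el T (x y : el_ob T) (h : lec (proj1_sig x) (proj1_sig y)) : el_hom x y :=
  exist _ (glab_of (proj1_sig x) (proj1_sig y)) (glab_ofP h).

Lemma el_lec T (x y : el_ob T) (f : el_hom x y) : lec (proj1_sig x) (proj1_sig y).
Proof. by apply/lecP; exists (proj1_sig f); exact: proj2_sig f. Qed.

Lemma vert_lec j c : j <= 1 -> c != [::] -> lec [:: j] (0 :: c).
Proof. by move=> j1 cn; rewrite F2 //; case: j j1 => [|[|]]. Qed.

Lemma susp_cell T c : is_cell c (susp T) ->
  (exists2 j, c = [:: j] & j <= 1) \/ (exists2 c0, c = 0 :: c0 & is_cell c0 T).
Proof.
case: c => [//|i [|z y]] h; first by left; exists i.
right; move: h; rewrite is_cell_cons // => /andP [].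
by case: i => [|i] //= _ h; exists (z :: y).
Qed.

Lemma cell0 T : is_cell [:: 0] T.
Proof. by case: T. Qed.

Section Main.
Variable T : tree.

Definition CT := seq_sub (cells_enum T).
Definition BT := option CT.

Definition leo (a b : BT) : bool :=
  match a, b with
  | _, None => true
  | None, Some _ => false
  | Some x, Some y => lec (ssval x) (ssval y)
  end.

Lemma leo_refl : reflexive leo.
Proof. by case => // x; exact: lec_refl. Qed.

Lemma leo_trans : transitive leo.
Proof. by case => [b|] [a|] [c|] //=; apply: lec_trans. Qed.

Lemma leo_anti : antisymmetric leo.
Proof.
case => [a|] [b|] //= h; congr Some; apply: val_inj; exact: lec_anti h.
Qed.

Lemma leo_top b : leo b None.
Proof. by case: b. Qed.

Definition sc (c : el_ob T) : CT := SeqSub (cells_enumP (proj2_sig c)).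

Definition SSd (dv : seq nat) : {set BT} :=
  [set b : BT | if b is Some y then is_cell (ssval y) T && lec dv (0 :: ssval y)
                else false].

Lemma SSd_dism dv : is_cell dv (susp T) -> dism leo None (SSd dv).
Proof.
move=> hd.
case: (susp_cell hd) => [[j -> j1] | [c0 -> hc0]].
-
  have allc : forall y : CT, (Some y \in SSd [:: j]) = is_cell (ssval y) T.
    move=> y; rewrite inE /=; case hy: (is_cell _ _) => //=.
    by apply: vert_lec => //; exact: cell_nil hy.
  pose x0 : BT := Some (SeqSub (cells_enumP (cell0 T))).
  pose kf := fun b : BT => if b is Some y then key (ssval y) else [::].
  pose p := fun b : BT => if b is Some y then Some (insubd y (partner (ssval y))) else None.
  apply: (@dism_key _ _ _ kf p x0).
  + by rewrite allc cell0.
  + by rewrite inE.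
  + move=> [a|] [b|] //; rewrite ?allc ?inE // => ha hb /= e.
    by congr Some; apply: val_inj; apply: (key_inj (cell_nil ha) (cell_nil hb) e).
  + move=> [y|]; last by rewrite inE.
    rewrite allc => hy ny.
    have c0 : ssval y != [:: 0].
      by apply: contra ny => /eqP e; apply/eqP; congr Some; apply: val_inj.
    have [pc plt pb] := beat_tree hy c0.
    have ep : ssval (insubd y (partner (ssval y))) = partner (ssval y).
      exact: insubdK (cells_enumP pc).
    split.
    * by rewrite /p allc ep.
    * by rewrite /kf /p ep.
    * rewrite /beat; apply/orP; case: pb => [[l1 H1] | [l1 H1]]; [left | right].
        rewrite /= ?ep l1 /=; apply/forallP => -[z|]; apply/implyP; rewrite !inE //.
        rewrite /= ?ep => /andP [/andP [hz _] lz]; apply/implyP; exact: H1.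
      rewrite /= ?ep l1 /=; apply/forallP => -[z|]; apply/implyP; rewrite !inE //.
      rewrite /= ?ep => /andP [/andP [hz _] lz]; apply/implyP; exact: H1.
-
  have c0n := cell_nil hc0.
  apply: (@dism_bot _ _ _ leo_refl leo_trans leo_anti (Some (SeqSub (cells_enumP hc0)))).
  + by rewrite inE /= hc0 lec_refl.
  + by rewrite inE.
  + move=> [y|] //; rewrite inE /= => /andP [hy ly].
    by move: ly; rewrite F4 // ?eqxx //; exact: cell_nil hy.
Qed.

Variable d : ob (theta_el (susp T)).

Let C := comma (xi_el T) d.

Definition oo (X : ob C) : BT := Some (sc (projT1 X)).

Definition SS : {set BT} := SSd (proj1_sig d).

Lemma SS_dism : dism leo None SS.
Proof. exact: SSd_dism (proj2_sig d). Qed.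

Lemma oo_inj (X Y : ob C) : oo X = oo Y -> X = Y.
Proof.
case: X => c g; case: Y => c' g' [] e.
have ec : c = c' by apply: sig_eq.
subst c'; congr existT; exact: el_hom_uniq.
Qed.

Lemma hom_leo (X Y : ob C) : hom C X Y -> leo (oo X) (oo Y).
Proof. by move=> h; rewrite /= ; exact: el_lec (proj1_sig h). Qed.

Lemma leo_hom (X Y : ob C) : leo (oo X) (oo Y) -> hom C X Y.
Proof.
move=> h; exists (lec_el h); exact: el_hom_uniq.
Defined.

Lemma hom_uniqC (X Y : ob C) (f g : hom C X Y) : f = g.
Proof. apply: sig_eq; exact: el_hom_uniq. Qed.

Lemma SS_o b : b \in SS <-> exists X : ob C, oo X = b.
Proof.
split.
  case: b => [y|]; rewrite inE // => /andP [cy ly].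
  pose c : el_ob T := exist _ (ssval y) cy.
  have h : lec (proj1_sig d) (proj1_sig (xi_fo c)) by [].
  exists (existT _ c (lec_el h)); congr Some; exact: val_inj.
case=> [[c g]] <-; rewrite inE /=; apply/andP; split; first exact: (proj2_sig c).
exact: el_lec g.
Qed.

Lemma inhC_ex : exists X : ob C, True.
Proof.
rewrite /C; case: d => dv hd.
case: (susp_cell hd) => [[j ej j1] | [c0 ec hc0]].
- pose c : el_ob T := exist _ [:: 0] (cell0 T).
  have h : lec dv (0 :: [:: 0]) by rewrite ej; exact: vert_lec.
  by exists (existT _ c (lec_el (x := exist _ dv hd) (y := xi_fo c) h)).
- pose c : el_ob T := exist _ c0 hc0.
  have h : lec dv (0 :: c0) by rewrite ec lec_refl.
  by exists (existT _ c (lec_el (x := exist _ dv hd) (y := xi_fo c) h)).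
Qed.

Definition inhC : ob C := proj1_sig (constructive_indefinite_description _ inhC_ex).

Lemma wcontr_comma : wcontr (nerve C).
Proof.
apply: (wcontr_transfer leo_refl leo_trans leo_anti leo_top (o := oo)
          oo_inj hom_leo leo_hom hom_uniqC SS_o SS_dism inhC).
Qed.

End Main.

Theorem mainTheorem5 (T : tree) : final (xi_el T).
Proof. move=> d; exact: wcontr_comma. Qed.
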